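(* Let $G$ be a finitely generated infinite discrete group with infinite commutator width, $\mathrm{cl}(G)=\infty$. For $K\in\mathbb{Z}_{\ge0}$ let $W_K\subseteq[G,G]$ be the set of elements of $G$ that can be written as a product of at most $K$ commutators. Then for every $K\in\mathbb{Z}_{\ge 0}$ there is no finite subset $F\subseteq G$ such that $G=\bigcup_{t\in F} t\,W_K$; that is, any set $T_K\subseteq G$ with $G=\bigcup_{t\in T_K}tW_K$ must be infinite.
   Context: $[a,b]=aba^{-1}b^{-1}$. For $x\in[G,G]$, $\mathrm{cl}_G(x)$ is the least number of commutators whose product is $x$; the commutator width is $\mathrm{cl}(G)=\sup_{x\in[G,G]}\mathrm{cl}_G(x)\in\mathbb{Z}_{\ge0}\cup\{\infty\}$. *)

(* Defs.v *)
From Stdlib Require Import List Arith.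
Import ListNotations.

Record Group := {
  carrier :> Type;
  gmul : carrier -> carrier -> carrier;
  gone : carrier;
  ginv : carrier -> carrier;
  gmulA : forall x y z, gmul x (gmul y z) = gmul (gmul x y) z;
  gmul1l : forall x, gmul gone x = x;
  gmulVl : forall x, gmul (ginv x) x = gone
}.

Section Defs.
Variable G : Group.

Definition commutator (a b : G) : G :=
  gmul G (gmul G (gmul G a b) (ginv G a)) (ginv G b).

Definition gprod (l : list G) : G := fold_right (gmul G) (gone G) l.

(* [G,G]: the subgroup generated by all commutators, i.e. the set of finite
   products of commutators and inverses of commutators *)
Definition in_derived (x : G) : Prop :=
  exists l : list (bool * (G * G)),
    x = gprod (map (fun p : bool * (G * G) => let c := commutator (fst (snd p)) (snd (snd p)) in
                             if fst p then c else ginv G c) l).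

Definition W (K : nat) (x : G) : Prop :=
  exists l : list (G * G), length l <= K /\
    x = gprod (map (fun p : G * G => commutator (fst p) (snd p)) l).

Definition infinite_commutator_width : Prop :=
  forall n : nat, exists x : G, in_derived x /\ ~ W n x.

Definition finitely_generated : Prop :=
  exists S : list G, forall g : G,
    exists l : list (bool * G),
      (forall p : bool * G, In p l -> In (snd p) S) /\
      g = gprod (map (fun p : bool * G => if fst p then snd p else ginv G (snd p)) l).

Definition infinite_group : Prop :=
  forall l : list G, exists g : G, ~ In g l.

End Defs.

(* Main.v *)
Require Import Defs.
From Stdlib Require Import List Arith Lia Classical.
Import ListNotations.

Section Aux.
Variable G : Group.
Notation "x * y" := (gmul G x y).
Notation "x ^-1" := (ginv G x) (at level 2).
Notation one := (gone G).

Lemma mulV (x : G) : x * x^-1 = one.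
Proof.
  rewrite <- (gmul1l G (x * x^-1)).
  rewrite <- (gmulVl G (x^-1)) at 1.
  rewrite <- gmulA. rewrite (gmulA G x^-1 x x^-1). rewrite gmulVl, gmul1l.
  apply gmulVl.
Qed.

Lemma mul1r (x : G) : x * one = x.
Proof. rewrite <- (gmulVl G x), gmulA, mulV, gmul1l. reflexivity. Qed.

Lemma inv_unique (y z : G) : y * z = one -> y = z^-1.
Proof.
  intro H. rewrite <- (mul1r y), <- (mulV z), gmulA, H, gmul1l. reflexivity.
Qed.

Lemma inv1 : one^-1 = one.
Proof. symmetry. apply inv_unique. apply gmul1l. Qed.

Lemma invM (a b : G) : (a * b)^-1 = b^-1 * a^-1.
Proof.
  symmetry. apply inv_unique.
  rewrite <- gmulA, (gmulA G a^-1 a b), gmulVl, gmul1l, gmulVl. reflexivity.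
Qed.

Lemma invK (a : G) : (a^-1)^-1 = a.
Proof. symmetry. apply inv_unique. apply mulV. Qed.

Lemma comm_inv (a b : G) : (commutator G a b)^-1 = commutator G b a.
Proof.
  unfold commutator. rewrite !invM, !invK. rewrite !gmulA. reflexivity.
Qed.

Lemma gprod_app (l1 l2 : list G) : gprod G (l1 ++ l2) = gprod G l1 * gprod G l2.
Proof.
  induction l1; simpl. rewrite gmul1l; reflexivity.
  rewrite IHl1, gmulA. reflexivity.
Qed.

Definition cm (p : G * G) := commutator G (fst p) (snd p).
Definition sw (p : G * G) : G * G := (snd p, fst p).

Lemma inv_prod (l : list (G * G)) :
  (gprod G (map cm l))^-1 = gprod G (map cm (rev (map sw l))).
Proof.
  induction l; simpl. apply inv1.
  rewrite invM, IHl, map_app, gprod_app. simpl. rewrite mul1r.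
  unfold cm. simpl. rewrite comm_inv. reflexivity.
Qed.

Lemma W_inv n (x : G) : W G n x -> W G n x^-1.
Proof.
  intros [l [Hl ->]]. exists (rev (map sw l)). split.
  rewrite length_rev, length_map; auto.
  apply inv_prod.
Qed.

Lemma W_mul n m (x y : G) : W G n x -> W G m y -> W G (n + m) (x * y).
Proof.
  intros [l [Hl ->]] [l' [Hl' ->]]. exists (l ++ l'). split.
  rewrite length_app; lia.
  rewrite map_app, gprod_app. reflexivity.
Qed.

Lemma W_mono n m (x : G) : n <= m -> W G n x -> W G m x.
Proof. intros H [l [Hl ->]]. exists l. split; [lia|reflexivity]. Qed.

Lemma derived_W (x : G) : in_derived G x -> exists n, W G n x.
Proof.
  intros [l ->]. exists (length l).
  exists (map (fun p : bool * (G * G) => if fst p then snd p else sw (snd p)) l).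
  split. rewrite length_map; auto.
  induction l as [|[b [a c]] l IH]; simpl. reflexivity.
  f_equal; [|exact IH]. destruct b; simpl. reflexivity.
  rewrite comm_inv. reflexivity.
Qed.

Lemma bound_list (F : list G) :
  exists N, forall t, In t F -> (exists n, W G n t) -> W G N t.
Proof.
  induction F as [|a F [N HN]]. exists 0. intros t [].
  destruct (classic (exists n, W G n a)) as [[n Hn]|Hn].
  - exists (max N n). intros t [<-|Ht] Hex.
    + eapply W_mono; [|exact Hn]. lia.
    + eapply W_mono; [|apply HN; auto]. lia.
  - exists N. intros t [<-|Ht] Hex. contradiction. auto.
Qed.
End Aux.

Theorem mainTheorem2 (G : Group) :
  finitely_generated G -> infinite_group G -> infinite_commutator_width G ->
  forall K : nat,
    ~ (exists F : list G,
         forall g : G, exists t : G, In t F /\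
           exists w : G, W G K w /\ g = gmul G t w).
Proof.
  intros _ _ Hinf K [F HF].
  destruct (bound_list G F) as [N HN].
  destruct (Hinf (N + K)) as [x [Hx Hnx]].
  apply Hnx. destruct (HF x) as [t [Ht [w [Hw Hxe]]]].
  destruct (derived_W G x Hx) as [n Hn].
  assert (Et : t = gmul G x (ginv G w)).
  { rewrite Hxe, <- gmulA, mulV, mul1r. reflexivity. }
  assert (Wt : W G N t).
  { apply HN; auto. exists (n + K). rewrite Et. apply W_mul; auto. apply W_inv; auto. }
  rewrite Hxe. apply W_mul; auto.
Qed.
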